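(* Let $b>1$ be an integer and let $\mathcal{A}$ be a minimal complete deterministic automaton over $A_b=\{0,\ldots,b-1\}$ whose initial state bears a self-loop labelled by $0$. Let $\ell$ be the number of states of $\mathcal{A}$ that belong to $0$-circuits. Then $\mathcal{A}$ accepts by value a purely periodic set of integers if and only if the following two conditions hold: (a) there exists a pseudo-morphism $\phi:\mathcal{A}\to\mathcal{A}_{?,\ell}$; (b) for all states $s,s'$ of $\mathcal{A}$, if $\phi(s)=\phi(s')$ then $s$ and $s'$ are ultimately-equivalent.
   Context: For $u=u_\ell\cdots u_0\in A_b^*$, $\mathrm{val}(u)=\sum_i u_i b^i$. An automaton accepts by value a set $X\subseteq\mathbb{N}$ if for every word $u$, $u$ is accepted iff $\mathrm{val}(u)\in X$. A set $P\subseteq\mathbb{N}$ is purely periodic if $P=R+p\mathbb{N}$ for some $p\ge1$ and $R\subseteq\{0,\ldots,p-1\}$. For $s$ a state and $u$ a word, $s\cdot u$ denotes the state reached from $s$ by reading $u$. A $0$-circuit is a circuit of the automaton all of whose transitions are labelled by the digit $0$. For an integer $q\ge1$, $\mathcal{A}_{?,q}$ is the deterministic complete automaton over $A_b$ with state set $\mathbb{Z}/q\mathbb{Z}=\{0,\ldots,q-1\}$, initial state $0$, transitions $n\xrightarrow{a}(nb+a)\bmod q$, and no specified final states. A pseudo-morphism between complete deterministic automata $\mathcal{A}\to\mathcal{M}$ is a map $\phi$ from states of $\mathcal{A}$ to states of $\mathcal{M}$ such that $\phi$ maps the initial state to the initial state and, for every state $s$ and letter $a$, $\phi(s\cdot a)=\phi(s)\cdot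 a$ (final states need not be preserved). Two states $s,s'$ are ultimately-equivalent if there exists $m\ge1$ such that $s\cdot u=s'\cdot u$ for every word $u$ with $|u|\ge m$. *)

(* Defs.v *)
From mathcomp Require Import all_boot.
Set Implicit Arguments. Unset Strict Implicit. Unset Printing Implicit Defensive.

(* Words are seq 'I_b, read left to right; u = u_l ... u_0 is the list
   [:: u_l; ...; u_0] (most significant digit first). *)

Section Auto.
Variables (b : nat) (Q : finType) (q0 : Q) (delta : Q -> 'I_b -> Q) (F : pred Q).

Definition run (s : Q) (u : seq 'I_b) : Q := foldl delta s u.

Definition valw (u : seq 'I_b) : nat :=
  \sum_(i < size u) nth 0 (map (@nat_of_ord b) (rev u)) i * b ^ i.

Definition accessible : Prop := forall s : Q, exists u, run q0 u = s.
Definition reduced : Prop :=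
  forall s s' : Q, (forall u, F (run s u) = F (run s' u)) -> s = s'.
Definition minimal_dfa : Prop := accessible /\ reduced.

Definition accepts_by_value (X : nat -> Prop) : Prop :=
  forall u : seq 'I_b, F (run q0 u) <-> X (valw u).

Definition on_zero_circuit (s : Q) : Prop :=
  exists u : seq 'I_b, [/\ 0 < size u, all (fun a => nat_of_ord a == 0) u & run s u = s].

Definition ultimately_equivalent (s s' : Q) : Prop :=
  exists m, 1 <= m /\ forall u : seq 'I_b, m <= size u -> run s u = run s' u.

(* pseudo-morphism to A_{?,q} (states Z/qZ = 'I_q, initial 0,
   n --a--> (n b + a) mod q) *)
Definition pseudo_morphism (q : nat) (phi : Q -> 'I_q) : Prop :=
  nat_of_ord (phi q0) = 0 /\
  forall (s : Q) (a : 'I_b), nat_of_ord (phi (delta s a)) = (phi s * b + a) %% q.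

End Auto.

Definition purely_periodic (P : nat -> Prop) : Prop :=
  exists p, 1 <= p /\ exists R : nat -> Prop,
    (forall r, R r -> r < p) /\
    (forall n, P n <-> exists r k, R r /\ n = r + p * k).

(* Main.v *)
Require Import Defs.
From mathcomp Require Import all_boot zify.
Set Implicit Arguments. Unset Strict Implicit. Unset Printing Implicit Defensive.

Section Words.
Variable b : nat.
Hypothesis b1 : 1 < b.

Lemma bpos : 0 < b. Proof. exact: ltnW b1. Qed.

Lemma valw_nil : valw (b:=b) [::] = 0.
Proof. by rewrite /valw big_ord0. Qed.

Lemma valw_rcons (u : seq 'I_b) (a : 'I_b) : valw (rcons u a) = valw u * b + a.
Proof.
rewrite /valw size_rcons big_ord_recl rev_rcons /= expn0 muln1 addnC.
congr (_ + _). rewrite big_distrl /=. apply: eq_bigr => i _.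
rewrite /= expnSr mulnA. done.
Qed.

Fixpoint rep_aux (k n : nat) : seq 'I_b :=
  if k is k'.+1 then rcons (rep_aux k' (n %/ b)) (Ordinal (ltn_pmod n bpos)) else [::].

Lemma size_rep k n : size (rep_aux k n) = k.
Proof. by elim: k n => [|k IH] n //=; rewrite size_rcons IH. Qed.

Lemma valw_rep k n : n < b ^ k -> valw (rep_aux k n) = n.
Proof.
elim: k n => [|k IH] n /=.
  by rewrite expn0 ltnS leqn0 => /eqP ->; rewrite valw_nil.
move=> hn; rewrite valw_rcons IH /=; first by rewrite -divn_eq.
by rewrite ltn_divLR ?bpos // -expnSr.
Qed.

Lemma rep_valw (u : seq 'I_b) : rep_aux (size u) (valw u) = u.
Proof.
elim/last_ind: u => [|u a IH]; first by rewrite /= .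
rewrite size_rcons /= valw_rcons divnMDl ?bpos // divn_small // addn0 IH.
congr rcons; apply/val_inj => /=.
by rewrite modnMDl modn_small.
Qed.

Lemma valw_lt (u : seq 'I_b) : valw u < b ^ size u.
Proof.
elim/last_ind: u => [|u a IH]; first by rewrite valw_nil.
rewrite valw_rcons size_rcons expnSr.
apply: (@leq_trans (valw u * b + b)); first by rewrite ltn_add2l.
by rewrite -mulSnr leq_mul2r IH orbT.
Qed.

Lemma rep_split j k n : rep_aux (k + j) n = rep_aux k (n %/ b ^ j) ++ rep_aux j n.
Proof.
elim: j n => [|j IH] n; first by rewrite addn0 expn0 divn1 cats0.
by rewrite addnS /= IH rcons_cat expnS divnMA.
Qed.

Lemma valw_cat (u v : seq 'I_b) : valw (u ++ v) = valw u * b ^ size v + valw v.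
Proof.
elim/last_ind: v => [|v a IH]; first by rewrite cats0 valw_nil expn0 muln1 addn0.
by rewrite -rcons_cat !valw_rcons IH size_rcons expnSr mulnDl !mulnA addnA.
Qed.

Lemma rep_zero k : all (fun a : 'I_b => nat_of_ord a == 0) (rep_aux k 0).
Proof. by elim: k => [|k IH] //=; rewrite all_rcons /= mod0n div0n IH. Qed.

Lemma valw_zero (u : seq 'I_b) : all (fun a : 'I_b => nat_of_ord a == 0) u -> valw u = 0.
Proof.
elim/last_ind: u => [|u a IH]; first by rewrite valw_nil.
by rewrite all_rcons => /andP [/eqP ha hu]; rewrite valw_rcons IH // ha.
Qed.

Variables (Q : finType) (q0 : Q) (delta : Q -> 'I_b -> Q).
Hypothesis zloop : forall a : 'I_b, nat_of_ord a = 0 -> delta q0 a = q0.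

Lemma run_cat s u v : run delta s (u ++ v) = run delta (run delta s u) v.
Proof. exact: foldl_cat. Qed.

Lemma run_rcons s u a : run delta s (rcons u a) = delta (run delta s u) a.
Proof. exact: foldl_rcons. Qed.

Lemma run_zero k : run delta q0 (rep_aux k 0) = q0.
Proof. by elim: k => [|k IH] //=; rewrite run_rcons div0n IH zloop //= mod0n. Qed.

Lemma run_rep_add k j n : n < b ^ j -> run delta q0 (rep_aux (k + j) n) = run delta q0 (rep_aux j n).
Proof. by move=> h; rewrite rep_split divn_small // run_cat run_zero. Qed.

Definition psi n := run delta q0 (rep_aux n n).

Lemma run_psi u : run delta q0 u = psi (valw u).
Proof.
rewrite /psi -{1}(rep_valw u) -(run_rep_add (valw u)) ?valw_lt //.
rewrite addnC run_rep_add // ltn_expl //.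
Qed.

Lemma run_psi_cat x v : run delta (psi x) v = psi (x * b ^ size v + valw v).
Proof. by rewrite /psi -run_cat run_psi valw_cat valw_rep // ltn_expl. Qed.

Lemma psi_split c k r : r < b ^ k -> psi (c * b ^ k + r) = run delta (psi c) (rep_aux k r).
Proof. by move=> h; rewrite run_psi_cat size_rep valw_rep. Qed.

End Words.

Section Dir2.
Variables (b : nat) (Q : finType) (q0 : Q) (delta : Q -> 'I_b -> Q) (F : pred Q) (l : nat).
Hypothesis b1 : 1 < b.
Hypothesis zloop : forall a : 'I_b, nat_of_ord a = 0 -> delta q0 a = q0.
Variable phi : Q -> 'I_l.
Hypothesis pm : pseudo_morphism q0 delta phi.
Hypothesis ue : forall s s' : Q, phi s = phi s' -> ultimately_equivalent delta s s'.

Lemma phi_run u : nat_of_ord (phi (run delta q0 u)) = valw u %% l.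
Proof.
case: pm => h0 hs.
elim/last_ind: u => [|u a IH]; first by rewrite /= h0 valw_nil mod0n.
by rewrite run_rcons hs IH valw_rcons // -modnDml -[in RHS]modnDml modnMml.
Qed.

Lemma uniform_bound : exists M, forall s s', phi s = phi s' ->
  forall u, M <= size u -> run delta s u = run delta s' u.
Proof.
suff: forall r : seq (Q * Q), exists M, forall pr, pr \in r -> phi pr.1 = phi pr.2 ->
  forall u, M <= size u -> run delta pr.1 u = run delta pr.2 u.
  case/(_ (enum {: Q * Q})) => M HM; exists M => s s' e u hu.
  by apply: (HM (s, s')) => //; rewrite mem_enum.
elim => [|pr r [M HM]]; first by exists 0.
case: (boolP (phi pr.1 == phi pr.2)) => [/eqP e|ne].
  have [m [_ Hm]] := ue e.
  exists (maxn m M) => pr'; rewrite inE => /orP [/eqP -> _|hin e'] u hu.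
    by apply: Hm; apply: leq_trans hu; apply: leq_maxl.
  by apply: HM => //; apply: leq_trans hu; apply: leq_maxr.
exists M => pr'; rewrite inE => /orP [/eqP -> e|hin e'] u hu.
  by rewrite e eqxx in ne.
exact: HM.
Qed.

Lemma dir2 : exists X : nat -> Prop, purely_periodic X /\ accepts_by_value q0 delta F X.
Proof.
have lpos : 0 < l by case: (phi q0) => m hm; apply: leq_ltn_trans hm.
have [M HM] := uniform_bound.
pose P := l * b ^ M.
have Ppos : 0 < P by rewrite muln_gt0 lpos expn_gt0 bpos.
have key : forall n, psi b1 q0 delta (n + P) = psi b1 q0 delta n.
  move=> n.
  have hr : n %% b ^ M < b ^ M by rewrite ltn_pmod // expn_gt0 bpos.
  rewrite {1 2}(divn_eq n (b ^ M)) /P -addnA [_ + l * _]addnC addnA -mulnDl.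
  rewrite !(psi_split b1 zloop) //; apply: HM; last by rewrite size_rep.
  apply: ord_inj; rewrite /psi !phi_run !valw_rep; [by rewrite modnDr|exact: ltn_expl|exact: ltn_expl].
have keyk : forall n k, psi b1 q0 delta (n + P * k) = psi b1 q0 delta n.
  move=> n; elim => [|k IH]; first by rewrite muln0 addn0.
  by rewrite mulnS addnCA addnC key IH.
have keymod : forall n, psi b1 q0 delta n = psi b1 q0 delta (n %% P).
  by move=> n; rewrite {1}(divn_eq n P) addnC mulnC keyk.
exists (fun n => F (psi b1 q0 delta n)); split.
  exists P; split => //.
  exists (fun r => r < P /\ F (psi b1 q0 delta r)); split; first by move=> r [].
  move=> n; split.
    move=> hF; exists (n %% P), (n %/ P); split.
      by split; [rewrite ltn_pmod | rewrite -keymod].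
    by rewrite mulnC addnC -divn_eq.
  by case=> r [k [[_ hr] ->]]; rewrite keyk.
by move=> u; rewrite (run_psi b1 zloop).
Qed.

End Dir2.

Lemma pow_eventually (b p : nat) : 0 < p ->
  exists i c, 0 < c /\ forall k m, i <= k -> b ^ (k + m * c) = b ^ k %[mod p].
Proof.
move=> pp.
pose f := fun k : 'I_p.+1 => Ordinal (ltn_pmod (b ^ k) pp).
have : ~~ injectiveb f.
  apply/negP => /injectiveP inj; have := leq_card f inj.
  by rewrite !card_ord ltnn.
case/injectivePn => x [y] nxy fxy.
have e : b ^ x = b ^ y %[mod p] by have := congr1 val fxy.
have nxy' : nat_of_ord x != nat_of_ord y by [].
move: (nat_of_ord x) (nat_of_ord y) nxy' e => {f fxy nxy x y} x y nxy e.
have [i [j [lij eij]]] : exists i j, i < j /\ b ^ i = b ^ j %[mod p].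
  case: (ltngtP x y) => h.
  - by exists x, y.
  - by exists y, x.
  - by rewrite h eqxx in nxy.
exists i, (j - i); split; first by rewrite subn_gt0.
move=> k m hk; elim: m => [|m IH]; first by rewrite mul0n addn0.
have -> : k + m.+1 * (j - i) = (k + m * (j - i) - i) + j.
  rewrite mulSn; have : i <= k + m * (j - i) by apply: leq_trans hk (leq_addr _ _).
  move=> h; move: (m * (j - i)) h => t h; clear - h lij; lia.
have hi : i <= k + m * (j - i) := leq_trans hk (leq_addr _ _).
rewrite -IH; move: (k + m * (j - i)) hi => K hi.
by rewrite -{2}(subnK hi) !expnD -modnMmr -eij modnMmr.
Qed.

Section Dir1.
Variables (b : nat) (Q : finType) (q0 : Q) (delta : Q -> 'I_b -> Q) (F : pred Q).
Hypothesis b1 : 1 < b.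
Hypothesis zloop : forall a : 'I_b, nat_of_ord a = 0 -> delta q0 a = q0.
Hypothesis hacc : accessible q0 delta.
Hypothesis hred : reduced delta F.
Variables (p : nat) (X : nat -> Prop).
Hypothesis ppos : 0 < p.
Hypothesis Xmod : forall n, X n <-> X (n %% p).
Hypothesis hAX : accepts_by_value q0 delta F X.

Local Notation ps := (psi b1 q0 delta).

Lemma FX n : F (ps n) <-> X n.
Proof. by have := hAX (rep_aux b1 n n); rewrite valw_rep // ltn_expl. Qed.

Lemma Xcong a a' : a %% p = a' %% p -> (X a <-> X a').
Proof. by move=> e; rewrite Xmod e -Xmod. Qed.

Lemma P1 x y : x %% p = y %% p -> ps x = ps y.
Proof.
move=> e; apply: hred => v; rewrite !(run_psi_cat b1 zloop).
apply/idP/idP => /FX h; apply/FX; apply: (proj1 (Xcong _)) h.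
  by rewrite -modnDml -modnMml e modnMml modnDml.
by rewrite -modnDml -modnMml -e modnMml modnDml.
Qed.

Lemma PA x y j r : ps x = ps y -> r < b ^ j -> ps (x * b ^ j + r) = ps (y * b ^ j + r).
Proof. by move=> e hr; rewrite !(psi_split b1 zloop) // e. Qed.

Lemma psi_rcons x (a : 'I_b) : delta (ps x) a = ps (x * b + a).
Proof.
have := run_psi_cat b1 zloop x [:: a]; rewrite /= expn1 => ->.
by rewrite (valw_rcons [::] a) valw_nil.
Qed.

Lemma psi_mod x : ps x = ps (x %% p).
Proof. by apply: P1; rewrite modn_mod. Qed.

Lemma psi_onto s : exists x : 'I_p, ps x = s.
Proof.
have [u <-] := hacc s.
by exists (Ordinal (ltn_pmod (valw u) ppos)); rewrite (run_psi b1 zloop) [RHS]psi_mod.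
Qed.

Lemma exJ : exists J, 0 < J /\ forall m, b ^ (m.+1 * J) = b ^ J %[mod p].
Proof.
have [i [c [cpos H]]] := pow_eventually b ppos.
exists (i.+1 * c); split; first by rewrite muln_gt0.
move=> m; rewrite mulSn mulnA; apply: H.
exact: leq_trans (leqnSn i) (leq_pmulr _ cpos).
Qed.

Variable J : nat.
Hypothesis Jpos : 0 < J.
Hypothesis HJ : forall m, b ^ (m.+1 * J) = b ^ J %[mod p].

Lemma BB : b ^ J * b ^ J = b ^ J %[mod p].
Proof. by have := HJ 1; rewrite mul2n -addnn expnD. Qed.

Definition Db t := (0 < t) && [forall w : 'I_p, ps w == ps (w + t * b ^ J)].
Definition DP t := forall w, ps w = ps (w + t * b ^ J).

Lemma DbP t : 0 < t -> DP t -> Db t.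
Proof. by move=> tp h; rewrite /Db tp /=; apply/forallP => w; rewrite -h. Qed.

Lemma DbP' t : Db t -> DP t.
Proof.
case/andP => _ /forallP h w.
have := h (Ordinal (ltn_pmod w ppos)) => /eqP /= e.
rewrite psi_mod e; apply: P1; by rewrite modnDml.
Qed.

Lemma DPp : DP p.
Proof. by move=> w; apply: P1; rewrite mulnC addnC modnMDl. Qed.

Lemma exD : exists t, Db t.
Proof. by exists p; apply: DbP => //; exact: DPp. Qed.

Definition d := ex_minn exD.

Lemma d_spec : [/\ 0 < d, DP d & forall t, 0 < t -> DP t -> d <= t].
Proof.
rewrite /d; case: ex_minnP => m hm hmin; split.
- by case/andP: hm.
- exact: DbP'.
- by move=> t tp ht; apply: hmin; apply: DbP.
Qed.

Lemma dpos : 0 < d. Proof. by case: d_spec. Qed.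

Lemma DP_add t1 t2 : DP t1 -> DP t2 -> DP (t1 + t2).
Proof. by move=> h1 h2 w; rewrite mulnDl addnA -h2 -h1. Qed.

Lemma DP_mul q t : DP t -> DP (q * t).
Proof.
move=> ht; elim: q => [|q IH]; first by move=> w; rewrite !mul0n addn0.
by rewrite mulSn; apply: DP_add.
Qed.

Lemma DP_dvd t : DP t -> d %| t.
Proof.
move=> ht; case: d_spec => dp hd hmin.
have hr : DP (t %% d).
  move=> w; rewrite (DP_mul (t %/ d) hd (w + t %% d * b ^ J)).
  rewrite -addnA -mulnDl [t %% d + _]addnC -divn_eq; exact: ht.
case: (posnP (t %% d)) => [h0|hpos]; first by rewrite /dvdn h0.
by have := hmin _ hpos hr; rewrite leqNgt ltn_pmod.
Qed.

Lemma DP_B1 : DP (b ^ J - 1).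
Proof.
have hB : 0 < b ^ J by rewrite expn_gt0 bpos.
move=> w; apply: P1; apply/eqP.
rewrite -(eqn_modDr (b ^ J)) -addnA -mulSnr subn1 prednK // eqn_modDl.
by rewrite BB.
Qed.

Lemma BmodD x : x * b ^ J = x %[mod d].
Proof.
have hB : 0 < b ^ J by rewrite expn_gt0 bpos.
have h1 : b ^ J = 1 %[mod d] by apply/eqP; rewrite eqn_mod_dvd //; exact: DP_dvd DP_B1.
by rewrite -modnMmr h1 modnMmr muln1.
Qed.

Lemma shift x y r : x %% d = y %% d -> ps (x * b ^ J + r) = ps (y * b ^ J + r).
Proof.
wlog hxy : x y / x <= y.
  move=> H e; case: (leqP x y) => h; first exact: H.
  by symmetry; apply: H; [exact: ltnW | rewrite e].
move=> e.
have hd : d %| y - x by rewrite -eqn_mod_dvd // e.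
case: d_spec => _ hdd _.
have := DP_mul ((y - x) %/ d) hdd; rewrite divnK // => hD.
rewrite (hD (x * b ^ J + r)); congr ps.
have : x * b ^ J <= y * b ^ J by rewrite leq_mul2r hxy orbT.
rewrite mulnBl => h; move: (x * b ^ J) (y * b ^ J) h => X1 Y1 h; clear - h; lia.
Qed.

Lemma shift0 x y : x %% d = y %% d -> ps (x * b ^ J) = ps (y * b ^ J).
Proof. by move=> e; have := shift 0 e; rewrite !addn0. Qed.

Lemma unshift x y : ps (x * b ^ J) = ps (y * b ^ J) -> x %% d = y %% d.
Proof.
wlog hxy : x y / x <= y.
  move=> H e; case: (leqP x y) => h; first exact: H.
  by symmetry; apply: H; [exact: ltnW | rewrite e].
move=> e.
suff hD : DP (y - x).
  by have := DP_dvd hD; rewrite -eqn_mod_dvd // => /eqP ->.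
move=> w.
pose j := J * p.
have hj : p <= b ^ j.
  apply: leq_trans (ltnW (ltn_expl p b1)) _.
  by apply: leq_pexp2l; [exact: bpos | rewrite /j leq_pmull].
have hBj : b ^ J * b ^ j = b ^ J %[mod p].
  by rewrite -expnD /j -mulnS mulnC; exact: HJ p.
pose r := (w + (p - (x * b ^ J) %% p)) %% p.
have hr : r < b ^ j by apply: leq_trans (ltn_pmod _ ppos) hj.
have hxr : (x * b ^ J + r) %% p = w %% p.
  rewrite /r modnDmr -modnDml.
  have hm := ltn_pmod (x * b ^ J) ppos.
  move: (x * b ^ J %% p) hm => m hm.
  have -> : m + (w + (p - m)) = w + p by clear - hm; lia.
  by rewrite modnDr.
have e1 : ps w = ps (x * b ^ J * b ^ j + r).
  apply: P1; by rewrite -modnDml -mulnA -modnMmr hBj modnMmr modnDml hxr.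
rewrite e1 (PA e hr); apply: P1.
rewrite -modnDml -mulnA -modnMmr hBj modnMmr modnDml.
have -> : y * b ^ J + r = (y - x) * b ^ J + (x * b ^ J + r).
  by rewrite mulnBl addnA subnK // leq_mul2r hxy orbT.
by rewrite -modnDmr hxr modnDmr addnC.
Qed.

Lemma inj_d n n' : ps n = ps n' -> n %% d = n' %% d.
Proof.
move=> e; apply: unshift.
have h := fun y => run_psi_cat b1 zloop y (rep_aux b1 J 0).
rewrite (valw_zero (rep_zero b1 J)) size_rep in h.
by rewrite -[_ * _]addn0 -h e h addn0.
Qed.

Lemma zc s : on_zero_circuit delta s <-> exists x : 'I_d, s = ps (x * b ^ J).
Proof.
split.
  case=> u [hu hall hrun].
  have [x0 hx0] := psi_onto s.
  have hv := valw_zero hall.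
  have hstep : forall y, run delta (ps y) u = ps (y * b ^ size u).
    by move=> y; rewrite (run_psi_cat b1 zloop) hv addn0.
  have hit : forall m, ps (x0 * b ^ (size u * m)) = s.
    elim => [|m IH]; first by rewrite muln0 expn0 muln1.
    by rewrite mulnS expnD mulnCA [b ^ _ * _]mulnC -hstep IH hrun.
  exists (Ordinal (ltn_pmod x0 dpos)); rewrite -(hit J) /=.
  rewrite (@shift0 (x0 %% d) x0) ?modn_mod //.
  apply: P1.
  have hc : b ^ (size u * J) = b ^ J %[mod p] by rewrite -(prednK hu) HJ.
  by rewrite -modnMmr hc modnMmr.
case=> x ->; exists (rep_aux b1 J 0); split.
- by rewrite size_rep.
- exact: rep_zero.
- rewrite (run_psi_cat b1 zloop) (valw_zero (rep_zero b1 J)) addn0 size_rep.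
  by apply: P1; rewrite -mulnA -modnMmr BB modnMmr.
Qed.

Lemma card_zc (S : {set Q}) : (forall s, s \in S <-> on_zero_circuit delta s) -> #|S| = d.
Proof.
move=> hS.
have -> : S = [set ps (x * b ^ J) | x : 'I_d].
  apply/setP => s; apply/idP/imsetP.
    by move/hS/zc => [x ->]; exists x.
  by case=> x _ ->; apply/hS/zc; exists x.
rewrite card_imset ?card_ord //.
move=> x y /unshift h; apply: ord_inj.
by rewrite -(modn_small (ltn_ord x)) -(modn_small (ltn_ord y)).
Qed.

Definition phi (s : Q) : 'I_d :=
  if [pick x : 'I_p | ps x == s] is Some x then Ordinal (ltn_pmod x dpos) else Ordinal dpos.

Lemma phi_spec s : exists x, ps x = s /\ nat_of_ord (phi s) = x %% d.
Proof.
rewrite /phi; case: pickP => [x /eqP hx | hn]; first by exists x.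
have [x hx] := psi_onto s.
by have := hn x; rewrite hx eqxx.
Qed.

Lemma dir1_main : pseudo_morphism q0 delta phi /\
  (forall s s', phi s = phi s' -> ultimately_equivalent delta s s').
Proof.
split; first split.
- have [x [hx ->]] := phi_spec q0.
  have h0 : ps 0 = q0 by [].
  by rewrite -h0 in hx; rewrite (inj_d hx) mod0n.
- move=> s a.
  have [x [hx ->]] := phi_spec (delta s a).
  have [y [hy ->]] := phi_spec s.
  rewrite -hy psi_rcons in hx.
  by rewrite (inj_d hx) -[RHS]modnDml modnMml modnDml.
- move=> s s' e.
  have [x [hx hpx]] := phi_spec s; have [y [hy hpy]] := phi_spec s'.
  have exy : x %% d = y %% d by rewrite -hpx -hpy e.
  exists J; split => // u hu; rewrite -hx -hy !(run_psi_cat b1 zloop).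
  have -> : size u = (size u - J) + J by rewrite subnK.
  rewrite !expnD !mulnA; apply: shift.
  by rewrite -modnMml exy modnMml.
Qed.

End Dir1.

Theorem theorem24 (b : nat) (Q : finType) (q0 : Q) (delta : Q -> 'I_b -> Q)
    (F : pred Q) (l : nat) :
  1 < b ->
  minimal_dfa q0 delta F ->
  (forall a : 'I_b, nat_of_ord a = 0 -> delta q0 a = q0) ->
  (* l = number of states lying on 0-circuits *)
  (exists S : {set Q}, (forall s, s \in S <-> on_zero_circuit delta s) /\ #|S| = l) ->
  (exists X : nat -> Prop, purely_periodic X /\ accepts_by_value q0 delta F X)
  <->
  (exists phi : Q -> 'I_l,
     pseudo_morphism q0 delta phi /\
     (forall s s' : Q, phi s = phi s' -> ultimately_equivalent delta s s')).
Proof.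
move=> b1 [hacc hred] zloop [S [hS hcard]]; split.
- case=> X [[p [p1 [R [hR hX]]]] hAX].
  have Xmod : forall n, X n <-> X (n %% p).
    move=> n; rewrite !hX; split.
      case=> r [k [hr ->]]; exists r, 0; split => //.
      by rewrite muln0 addn0 addnC mulnC modnMDl modn_small ?hR.
    case=> r [k [hr e]]; exists r, (n %/ p); split => //.
    have er : r = n %% p.
      have := congr1 (modn^~ p) e; rewrite /= modn_mod => ->.
      by rewrite addnC mulnC modnMDl modn_small ?hR.
    by rewrite er addnC mulnC -divn_eq.
  have [J [Jpos HJ]] := exJ b p1.
  subst l.
  rewrite (card_zc b1 zloop hacc hred p1 Xmod hAX Jpos HJ hS).
  eexists; exact: (dir1_main b1 zloop hacc hred p1 Xmod hAX Jpos HJ).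
- case=> phi [pm ue]; exact: (dir2 F b1 zloop pm ue).
Qed.
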